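(* Let $n\ge 1$ and $k\in\{0,1,\dots,n-1\}$ be integers. Then $$B_{k}^{(-n)}=\frac{1}{n!\binom{n+k}{k}}\sum_{j=0}^{n+k-1}E(n+k,j)\binom{j}{k}.$$
   Context: The Bernoulli numbers of higher order $B_j^{(a)}$ (for integer $a$) are defined by $\sum_{j=0}^{\infty}B_{j}^{(a)}\frac{t^{j}}{j!}=\left(\frac{t}{e^{t}-1}\right)^{a}$. For $m\ge 1$ and $i=0,1,\dots,m-1$, the Eulerian numbers are $E(m,i)=\sum_{j=0}^{i}(-1)^{j}\binom{m+1}{j}(i+1-j)^{m}$. *)

(* Defs.v *)
From mathcomp Require Import all_boot all_order all_algebra.
Set Implicit Arguments. Unset Strict Implicit. Unset Printing Implicit Defensive.
Import Order.TTheory GRing.Theory Num.Theory.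
Local Open Scope ring_scope.

(* formal power series: n |-> coefficient of t^n *)
Definition ps := nat -> rat.

Definition ps_one : ps := fun n => (n == 0)%:R.

Definition ps_mul (a b : ps) : ps :=
  fun n => \sum_(i < n.+1) a i * b (n - i)%N.

Definition ps_pow (a : ps) (m : nat) : ps := iter m (ps_mul a) ps_one.

(* coefficients 0..n of the multiplicative inverse of a (assuming a 0 != 0) *)
Fixpoint ps_inv_upto (a : ps) (n : nat) : seq rat :=
  match n with
  | 0 => [:: (a 0%N)^-1]
  | n'.+1 => let s := ps_inv_upto a n' in
      rcons s (- (a 0%N)^-1 * \sum_(i < n'.+1) a i.+1 * nth 0 s (n' - i)%N)
  end.

Definition ps_inv (a : ps) : ps := fun n => nth 0 (ps_inv_upto a n) n.

(* (e^t - 1)/t = sum_m t^m/(m+1)! *)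
Definition expm1_div_t : ps := fun m => ((m.+1)`!%:R)^-1.

Definition t_div_expm1 : ps := ps_inv expm1_div_t.

Definition hbern_gf (a : int) : ps :=
  match a with
  | Posz m => ps_pow t_div_expm1 m
  | Negz m => ps_pow expm1_div_t m.+1
  end.

(* Bernoulli numbers of higher order B_j^(a): sum_j B_j^(a) t^j/j! = (t/(e^t-1))^a *)
Definition hbern (a : int) (j : nat) : rat := (j`!)%:R * hbern_gf a j.

Definition eulerian (m i : nat) : int :=
  \sum_(j < i.+1) (-1) ^+ j * ('C(m.+1, j))%:Z * (((i.+1 - j) ^ m)%N)%:Z.

(* Main.v *)
Require Import Defs.
From mathcomp Require Import all_boot all_order all_algebra.
From mathcomp Require Import ring zify.
Import Order.TTheory GRing.Theory Num.Theory.
Local Open Scope ring_scope.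

Definition D (N : nat) (f : nat -> rat) : rat :=
  \sum_(i < N.+1) (-1) ^+ (N - i) * ('C(N, i))%:R * f i.

Lemma D_ext N f g : (forall i, f i = g i) -> D N f = D N g.
Proof. by move=> h; rewrite /D; apply: eq_bigr => i _; rewrite h. Qed.

Lemma D_sub N f g : D N f - D N g = D N (fun i => f i - g i).
Proof. rewrite /D -sumrB; apply: eq_bigr => i _; ring. Qed.

Lemma D_sum N d (h : nat -> nat -> rat) :
  D N (fun i => \sum_(e < d) h e i) = \sum_(e < d) D N (h e).
Proof.
rewrite /D (exchange_big) /=; apply: eq_bigr => i _; rewrite mulr_sumr //.
Qed.

Lemma D_scale N a f : D N (fun i => a * f i) = a * D N f.
Proof. rewrite /D mulr_sumr; apply: eq_bigr => i _; ring. Qed.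

Lemma D_S N f : D N.+1 f = D N (fun i => f i.+1) - D N f.
Proof.
have E1 : D N.+1 f = (-1) ^+ N.+1 * f 0%N +
   (\sum_(i < N.+1) (-1) ^+ (N - i) * ('C(N, i.+1))%:R * f i.+1
   + \sum_(i < N.+1) (-1) ^+ (N - i) * ('C(N, i))%:R * f i.+1).
  rewrite /D big_ord_recl /= subn0 bin0 mulr1 -big_split /=; congr (_ + _).
  by apply: eq_bigr => i _; rewrite /bump /= add1n subSS binS natrD; ring.
have E2 : D N f = (-1) ^+ N * f 0%N +
   \sum_(i < N) (-1) ^+ (N - i.+1) * ('C(N, i.+1))%:R * f i.+1.
  by rewrite /D big_ord_recl /= subn0 bin0 mulr1.
have E3 : \sum_(i < N.+1) (-1) ^+ (N - i) * ('C(N, i.+1))%:R * f i.+1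
   = - \sum_(i < N) (-1) ^+ (N - i.+1) * ('C(N, i.+1))%:R * f i.+1.
  rewrite big_ord_recr /= (bin_small (ltnSn N)) mulr0 mul0r addr0.
  rewrite -sumrN; apply: eq_bigr => i _.
  rewrite -(subnSK (ltn_ord i)) exprS; ring.
rewrite E1 E3 E2 /D exprS; ring.
Qed.

Lemma pow_diff (x : rat) d :
  (x + 1) ^+ d - x ^+ d = \sum_(e < d) ('C(d, e))%:R * x ^+ e.
Proof.
rewrite exprD1n big_ord_recr /= binn mulr1n addrK.
by apply: eq_bigr => i _; rewrite mulr_natl.
Qed.

Lemma D_vanish N d (c : rat) : (d < N)%N -> D N (fun i => (c + i%:R) ^+ d) = 0.
Proof.
elim: N d c => [//|N IH] d c hd.
rewrite D_S D_sub.
rewrite (@D_ext _ _ (fun i => \sum_(e < d) ('C(d, e))%:R * (c + i%:R) ^+ e)); last first.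
  move=> i; rewrite -pow_diff; congr (_ ^+ _ - _); rewrite mulrSr; ring.
rewrite (D_sum N d (fun e i => ('C(d, e))%:R * (c + i%:R) ^+ e)); apply: big1 => e _; rewrite D_scale IH ?mulr0 //.
exact: (leq_trans (ltn_ord e)).
Qed.

Definition F n m := D n (fun i => (i%:R : rat) ^+ m).

Lemma F_S n M : F n.+1 M = \sum_(j < M) ('C(M, j))%:R * F n j.
Proof.
rewrite /F D_S D_sub.
rewrite (@D_ext _ _ (fun i => \sum_(e < M) ('C(M, e))%:R * (i%:R : rat) ^+ e)); last first.
  by move=> i; rewrite -pow_diff mulrSr.
rewrite (D_sum n M (fun e i => ('C(M, e))%:R * (i%:R : rat) ^+ e)).
by apply: eq_bigr => e _; rewrite D_scale.
Qed.

Lemma F_small n j : (j < n)%N -> F n j = 0.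
Proof.
move=> h; rewrite /F (@D_ext _ _ (fun i => (0 + i%:R) ^+ j)); last by move=> i; rewrite add0r.
exact: D_vanish.
Qed.

Lemma fact_neq0 n : ((n`!)%:R : rat) != 0.
Proof. by rewrite pnatr_eq0 -lt0n fact_gt0. Qed.

Lemma sum_shift n k (G : nat -> rat) : (forall j, (j < n)%N -> G j = 0) ->
  \sum_(j < n + k.+1) G j = \sum_(i < k.+1) G (n + (k - i))%N.
Proof.
move=> h; rewrite big_split_ord /= big1 ?add0r; last by move=> i _; apply: h.
rewrite (reindex_inj rev_ord_inj) /=; apply: eq_bigr => i _.
by rewrite subSS.
Qed.

Lemma ps_pow_coef n k :
  ps_pow expm1_div_t n k = F n (n + k) / ((n + k)`!)%:R.
Proof.
elim: n k => [|n IH] k.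
  rewrite /ps_pow /= /ps_one /F /D big_ord1 /= add0n.
  case: k => [|k]; first by rewrite expr0 /= subnn expr0 bin0 !mul1r.
  by rewrite /= subnn exprS mulr0n mul0r mulr0 mul0r.
rewrite [LHS]/ps_pow /= -/(ps_pow expm1_div_t n) /ps_mul.
under eq_bigr => i _ do rewrite IH.
rewrite F_S addSnnS mulr_suml.
rewrite (@sum_shift n k (fun j => ('C(n + k.+1, j))%:R * F n j / ((n + k.+1)`!)%:R)); last by move=> j hj; rewrite F_small // mulr0 mul0r.
apply: eq_bigr => i _.
have hi : (i <= k)%N by rewrite -ltnS.
set a := (n + (k - i))%N.
have hM : (n + k.+1 = a + i.+1)%N by rewrite /a; lia.
have hb := bin_fact (leq_addr i.+1 a).
rewrite addKn in hb.
rewrite hM /expm1_div_t.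
have hC : (('C(a + i.+1, a))%:R : rat) != 0 by rewrite pnatr_eq0 -lt0n bin_gt0 leq_addr.
move: hb (fact_neq0 i.+1) (fact_neq0 a) hC.
move: ((i.+1)`!) ('C(a + i.+1, a)) (a`!) => b c d hb hbn hdn hcn.
rewrite -hb !natrM; field.
by rewrite hbn hdn hcn.
Qed.

Lemma PA N a : \sum_(l < a.+1) (-1) ^+ l * ('C(N.+1, l))%:R = (-1) ^+ a * ('C(N, a))%:R :> rat.
Proof.
elim: a => [|a IH]; first by rewrite big_ord1 !bin0.
by rewrite big_ord_recr /= IH binS natrD exprS; ring.
Qed.

Definition g N k a : rat := \sum_(l < a.+1) (-1) ^+ l * ('C(N, l))%:R * ('C(a - l, k))%:R.

Lemma g_rec N k a : g N k.+1 a.+1 = g N k.+1 a + g N k a.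
Proof.
rewrite /g big_ord_recr /= subnn bin0n mulr0 addr0 -big_split /=.
apply: eq_bigr => l _; rewrite subSn ?binS ?natrD; first ring.
by rewrite -ltnS.
Qed.

Lemma g_zero N k a : (a < k)%N -> g N k a = 0.
Proof.
move=> h; rewrite /g big1 // => l _; rewrite (@bin_small (a - l) k) ?mulr0 //; lia.
Qed.

Lemma g_cum N k b : g N k.+1 b = \sum_(c < b) g N k c.
Proof.
elim: b => [|b IH]; first by rewrite big_ord0 /g big_ord1 bin0n mulr0.
by rewrite g_rec IH big_ord_recr.
Qed.

Lemma G_val k n a : g (n + k).+1 k (a + k) = (-1) ^+ a * ('C(n, a))%:R.
Proof.
elim: k n a => [|k IH] n a.
  rewrite /g !addn0 -PA; apply: eq_bigr => l _; rewrite bin0 mulr1 //.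
rewrite g_cum (_ : (a + k.+1 = k + a.+1)%N); last by lia.
rewrite big_split_ord /= big1 ?add0r; last by move=> c _; apply: g_zero.
rewrite -PA; apply: eq_bigr => i _.
by rewrite -addSnnS [(k + _)%N]addnC IH.
Qed.

Definition Er m j : rat :=
  \sum_(l < j.+1) (-1) ^+ l * ('C(m.+1, l))%:R * (((j.+1 - l)%N)%:R) ^+ m.

Lemma eulerianE m j : (eulerian m j)%:~R = Er m j.
Proof.
rewrite /eulerian /Er rmorph_sum; apply: eq_bigr => l _.
rewrite !rmorphM /= rmorphXn /= rmorphN1 -natrX.
by [].
Qed.

Lemma sgn_sub N l : (l <= N)%N -> (-1) ^+ (N - l) = (-1) ^+ N * (-1) ^+ l :> rat.
Proof.
move=> h; rewrite -{2}(subnK h) exprD -mulrA -exprD addnn -mul2n exprM.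
by rewrite sqrrN !expr1n mulr1.
Qed.

Lemma widen_zero n1 n2 (G : nat -> rat) : (n1 <= n2)%N ->
  (forall i, (n1 <= i)%N -> (i < n2)%N -> G i = 0) ->
  \sum_(i < n1) G i = \sum_(i < n2) G i.
Proof.
move=> h hz; rewrite (big_ord_widen n2 G h) big_mkcond /=.
apply: eq_bigr => i _; case: ifP => // hi; rewrite hz //; first by rewrite leqNgt hi.
Qed.

Definition Ee m j : rat :=
  \sum_(l < m.+2) (-1) ^+ l * ('C(m.+1, l))%:R * (((j.+1 - l)%N)%:R) ^+ m.

Lemma Er_ext m j : (0 < m)%N -> (j < m)%N -> Er m j = Ee m j.
Proof.
move=> hm hj; rewrite /Er /Ee.
apply: (@widen_zero _ _ (fun l => (-1) ^+ l * ('C(m.+1, l))%:R * (((j.+1 - l)%N)%:R) ^+ m)); first by lia.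
move=> i hi _; rewrite (_ : (j.+1 - i = 0)%N); last by lia.
by rewrite expr0n eqn0Ngt hm mulr0.
Qed.

Lemma full_vanish m j : 
  \sum_(l < m.+2) (-1) ^+ l * ('C(m.+1, l))%:R * ((j.+1)%:R - l%:R) ^+ m = 0 :> rat.
Proof.
have hD : D m.+1 (fun l => (- (j.+1)%:R + l%:R) ^+ m) = 0 by apply: D_vanish.
have -> : \sum_(l < m.+2) (-1) ^+ l * ('C(m.+1, l))%:R * ((j.+1)%:R - l%:R) ^+ m
   = (-1) ^+ m.+1 * (-1) ^+ m * D m.+1 (fun l => (- (j.+1)%:R + l%:R) ^+ m).
  rewrite /D mulr_sumr; apply: eq_bigr => l _.
  rewrite sgn_sub; last by rewrite -ltnS.
  have -> : ((j.+1)%:R - l%:R) ^+ m = (-1) ^+ m * (- (j.+1)%:R + l%:R) ^+ m :> rat.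
    by rewrite -exprMn; congr (_ ^+ _); ring.
  have s2 : (-1) ^+ m.+1 * (-1) ^+ m.+1 = 1 :> rat.
    by rewrite -exprD addnn -mul2n exprM sqrrN !expr1n.
  have s3 : (-1) ^+ m * (-1) ^+ m = 1 :> rat.
    by rewrite -exprD addnn -mul2n exprM sqrrN !expr1n.
  transitivity ((-1) ^+ m * ((-1) ^+ m.+1 * (-1) ^+ m.+1) *
     ((-1) ^+ l * ('C(m.+1, l))%:R * (- (j.+1)%:R + l%:R) ^+ m) : rat).
    by rewrite s2 mulr1; ring.
  ring.
by rewrite hD mulr0.
Qed.

Lemma Ee_sym m j : (0 < m)%N -> (j < m)%N -> Ee m j = Ee m (m - j.+1).
Proof.
move=> hm hj; apply/eqP; rewrite -subr_eq0; apply/eqP.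
rewrite -(full_vanish m j) {2}/Ee (reindex_inj rev_ord_inj) /= /Ee -sumrB.
apply: eq_bigr => l _.
have hl : (l < m.+2)%N := ltn_ord l.
rewrite subSS (_ : ((m - j.+1).+1 - (m.+1 - l) = l - j.+1)%N); last by lia.
rewrite bin_sub; last by rewrite -ltnS.
rewrite sgn_sub; last by rewrite -ltnS.
case: (leqP l j.+1) => hlj.
  rewrite (_ : (l - j.+1 = 0)%N); last by lia.
  rewrite natrB // expr0n eqn0Ngt hm /=; ring.
rewrite (_ : (j.+1 - l = 0)%N); last by lia.
rewrite natrB; last by apply: ltnW.
have -> : ((j.+1)%:R - l%:R) ^+ m = (-1) ^+ m * (l%:R - (j.+1)%:R) ^+ m :> rat.
  by rewrite -exprMn; congr (_ ^+ _); ring.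
rewrite expr0n eqn0Ngt hm /= exprS; ring.
Qed.

Lemma tri m (H : nat -> nat -> rat) :
  \sum_(j < m) \sum_(l < j.+1) H l (j - l)%N = \sum_(q < m) \sum_(l < m - q) H l q.
Proof.
elim: m => [|m IH]; first by rewrite !big_ord0.
rewrite big_ord_recr /= IH.
have -> : \sum_(q < m.+1) \sum_(l < m.+1 - q) H l q
   = \sum_(q < m.+1) (\sum_(l < m - q) H l q + H (m - q)%N q).
  apply: eq_bigr => q _.
  have hq : (q <= m)%N by rewrite -ltnS.
  by rewrite subSn // big_ord_recr.
rewrite big_split /= [X in _ = X + _]big_ord_recr /=.
rewrite subnn big_ord0 addr0; congr (_ + _).
rewrite (reindex_inj rev_ord_inj) /=; apply: eq_bigr => l _.
have hl : (l <= m)%N by rewrite -ltnS.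
by rewrite subSS subKn.
Qed.

Definition Hq n k l q := (-1) ^+ l * ('C((n + k).+1, l))%:R * ((q.+1)%:R : rat) ^+ (n + k)
   * ('C(n + k - (l + q).+1, k))%:R.

Lemma T_eq n k : (0 < n)%N ->
  \sum_(j < n + k) Er (n + k) j * ('C(j, k))%:R = F n (n + k).
Proof.
move=> hn.
have hm : (0 < n + k)%N by lia.
pose H := fun l q => (-1) ^+ l * ('C((n + k).+1, l))%:R * ((q.+1)%:R : rat) ^+ (n + k)
   * ('C(n + k - (l + q).+1, k))%:R.
rewrite (reindex_inj rev_ord_inj) /=.
have step : forall j : 'I_(n + k),
   Er (n + k) (n + k - j.+1) * ('C(n + k - j.+1, k))%:R = \sum_(l < j.+1) H l (j - l)%N.
  move=> j; have hj : (j < n + k)%N := ltn_ord j.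
  rewrite Er_ext // -?Ee_sym // -?Er_ext //; last by lia.
  rewrite /Er mulr_suml; apply: eq_bigr => l _.
  have hl : (l <= j)%N by rewrite -ltnS.
  rewrite /H /Hq subSn // subnKC //.
rewrite (eq_bigr _ (fun j _ => step j)) tri.
have step2 : forall q : 'I_(n + k),
   \sum_(l < n + k - q) H l q = ((q.+1)%:R) ^+ (n + k) * g (n + k).+1 k (n + k - q.+1).
  move=> q; have hq : (q < n + k)%N := ltn_ord q.
  rewrite /g subnSK // mulr_sumr; apply: eq_bigr => l _.
  have hl : (l < n + k - q)%N := ltn_ord l.
  rewrite /H /Hq (_ : (n + k - q.+1 - l = n + k - (l + q).+1)%N); last by lia.
  ring.
rewrite (eq_bigr _ (fun q _ => step2 q)).
rewrite big_split_ord /= [X in _ + X]big1 ?addr0; last first.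
  move=> q _; have hq := ltn_ord q; rewrite g_zero ?mulr0 //; lia.
rewrite /F /D big_ord_recl /= expr0n (negbTE (lt0n_neq0 hm)) mulr0 add0r.
apply: eq_bigr => q _.
have hq : (q < n)%N := ltn_ord q.
rewrite (_ : (n + k - q.+1 = (n - q.+1) + k)%N); last by lia.
rewrite G_val bin_sub //.
ring.
Qed.

Theorem mainTheorem4 (n k : nat) (hn : (1 <= n)%N) (hk : (k < n)%N) :
  hbern (- (n%:Z)) k =
    ((n`! * 'C(n + k, k))%N%:R)^-1 *
      \sum_(j < n + k) (eulerian (n + k) j)%:~R * ('C(j, k))%:R.
Proof.
have hT := @T_eq n k hn.
case: n hn hk hT => [//|n] hn hk hT.
rewrite /hbern (_ : hbern_gf (- (n.+1)%:Z) = ps_pow expm1_div_t n.+1) //.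
rewrite ps_pow_coef.
under eq_bigr => j _ do rewrite eulerianE.
rewrite hT.
have hb := bin_fact (leq_addl n.+1 k).
rewrite addnK in hb.
have hC : (('C(n.+1 + k, k))%:R : rat) != 0 by rewrite pnatr_eq0 -lt0n bin_gt0 leq_addl.
move: hb (fact_neq0 k) (fact_neq0 n.+1) hC.
move: ('C(n.+1 + k, k)) (k`!) ((n.+1)`!) => c a b hb ha hbn hc.
rewrite -hb !natrM; field.
by rewrite ha hbn hc.
Qed.
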